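(* Let $n\ge2$. (1) For every initial vector $\mathbf p^0\in\Delta_n$ with $p^0_i>0$ for all $i$, the trajectory $\mathbf p^{t+1}=F(\mathbf p^t)$ converges to $(\frac1n,\dots,\frac1n)$. (2) The set $\partial\Delta_n=\{\mathbf p\in\Delta_n:\ p_i=0\text{ for some }i\}$ is invariant under $F$, and every fixed point of $F$ lying in $\partial\Delta_n$ is an unstable fixed point of $F$ on $\Delta_n$ (a repeller: arbitrarily small perturbations making its zero coordinates positive are not damped).
   Context: $\Delta_n=\{\mathbf p\in\mathbb R^n: p_i\ge 0,\ \sum_i p_i=1\}$. For $\mathbf p\in\Delta_n$, $L(\mathbf p)=\sum_{k}p_k^2$ and $F(\mathbf p)_i=p_i\frac{n-p_i}{n-L(\mathbf p)}$. *)

(* Defs.v *)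
(* R : realType, vectors in R^n as row vectors 'rV[R]_n
   (normed with the max norm provided by mathcomp-analysis). *)
From HB Require Import structures.
From mathcomp Require Import all_boot all_order all_algebra.
From mathcomp Require Import all_classical all_reals all_analysis.
Set Implicit Arguments. Unset Strict Implicit. Unset Printing Implicit Defensive.
Import Order.TTheory GRing.Theory Num.Theory.
Import numFieldNormedType.Exports.
Local Open Scope ring_scope.

Section Defs.
Variables (R : realType) (n : nat).

Definition simplex (p : 'rV[R]_n) : Prop :=
  (forall i, 0 <= p ord0 i) /\ \sum_i p ord0 i = 1.

Definition bdry_simplex (p : 'rV[R]_n) : Prop :=
  simplex p /\ exists i, p ord0 i = 0.

Definition Lsq (p : 'rV[R]_n) : R := \sum_k p ord0 k ^+ 2.

Definition Fmap (p : 'rV[R]_n) : 'rV[R]_n :=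
  \row_i (p ord0 i * (n%:R - p ord0 i) / (n%:R - Lsq p)).

Definition barycenter : 'rV[R]_n := const_mx (n%:R)^-1.

Definition lyapunov_stable_on (D : 'rV[R]_n -> Prop)
    (f : 'rV[R]_n -> 'rV[R]_n) (q : 'rV[R]_n) : Prop :=
  forall e : R, 0 < e -> exists2 d : R, 0 < d &
    forall p, D p -> `|p - q| < d -> forall t : nat, `|iter t f p - q| < e.

End Defs.

(* Main.v *)
Require Import Defs.
From HB Require Import structures.
From mathcomp Require Import all_boot all_order all_algebra.
From mathcomp Require Import all_classical all_reals all_analysis.
From mathcomp Require Import ring lra.
Import Order.TTheory GRing.Theory Num.Theory.
Import numFieldNormedType.Exports.
Local Open Scope classical_set_scope.
Local Open Scope ring_scope.

Set Implicit Arguments. Unset Strict Implicit.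
Section S.
Variable R : realType.

Lemma step_real5 (N L a b c : R) : 2 <= N -> a <= L -> L <= b -> 0 < c -> c <= a ->
  b <= 1 -> a <= b -> 
      b * (N - b) / (N - L) - a * (N - a) / (N - L) <= (1 - c / N) * (b - a).
Proof.
move=> N2 aL Lb c0 ca b1 ab.
have NL : 0 < N - L by lra.
have N0 : 0 < N by lra.
have -> : 1 - c / N = (N - c) / N by field; lra.
rewrite -mulrBl ler_pdivrMr //.
have -> : (N - c) / N * (b - a) * (N - L) = ((N - c) * (b - a) * (N - L)) / N by field; lra.
rewrite ler_pdivlMr //.
have h0 : 0 <= N * (b - L) + N * (a - c) + c * L by nra.
have h1 := mulr_ge0 (ltac:(lra) : 0 <= b - a) h0.
nra.
Qed.

Lemma step_real (N L a b x : R) : 2 <= N -> a <= L -> L <= b -> 0 <= a ->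
  b <= 1 -> a <= x -> x <= b ->
  [/\ a <= a * (N - a) / (N - L), a * (N - a) / (N - L) <= x * (N - x) / (N - L),
      x * (N - x) / (N - L) <= b * (N - b) / (N - L) & b * (N - b) / (N - L) <= 1].
Proof.
move=> N2 aL Lb a0 b1 ax xb.
have NL : 0 < N - L by lra.
have N0 : 0 < N by lra.
split.
- rewrite ler_pdivlMr //; nra.
- rewrite ler_pM2r ?invr_gt0 //; nra.
- rewrite ler_pM2r ?invr_gt0 //; nra.
- rewrite ler_pdivrMr //; nra.
Qed.

Variable n : nat.
Hypothesis hn : (2 <= n)%N.

Let N : R := n%:R.
Lemma N2 : 2 <= N.
Proof. by rewrite /N (ler_nat R 2 n). Qed.

Lemma coord_le1 (p : 'rV[R]_n) : simplex p -> forall i, p ord0 i <= 1.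
Proof.
case=> hp hs i; rewrite -hs (bigD1 i) //= lerDl sumr_ge0 // => j _; exact: hp.
Qed.

Lemma Lsq_le b (p : 'rV[R]_n) : simplex p -> (forall i, p ord0 i <= b) -> Lsq p <= b.
Proof.
case=> hp hs hb; rewrite /Lsq.
apply: (@le_trans _ _ (\sum_i b * p ord0 i)).
  by apply: ler_sum => i _; rewrite expr2 ler_wpM2r.
by rewrite -mulr_sumr hs mulr1.
Qed.

Lemma Lsq_ge a (p : 'rV[R]_n) : simplex p -> (forall i, a <= p ord0 i) -> a <= Lsq p.
Proof.
case=> hp hs hb; rewrite /Lsq.
apply: (@le_trans _ _ (\sum_i a * p ord0 i)).
  by rewrite -mulr_sumr hs mulr1.
by apply: ler_sum => i _; rewrite expr2 ler_wpM2r.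
Qed.

Lemma L_lt (p : 'rV[R]_n) : simplex p -> 0 < N - Lsq p.
Proof.
move=> hp; have := Lsq_le hp (coord_le1 hp); have := N2; lra.
Qed.

Lemma sum_g (p : 'rV[R]_n) : simplex p ->
  \sum_i (p ord0 i * (N - p ord0 i)) = N - Lsq p.
Proof.
case=> hp hs.
rewrite (eq_bigr (fun i => N * p ord0 i - p ord0 i ^+ 2)); last first.
  by move=> i _; rewrite expr2; ring.
by rewrite sumrB -mulr_sumr hs mulr1.
Qed.

Lemma Fmap_E (p : 'rV[R]_n) i :
  Fmap p ord0 i = p ord0 i * (N - p ord0 i) / (N - Lsq p).
Proof. by rewrite mxE. Qed.

Lemma F_simplex (p : 'rV[R]_n) : simplex p -> simplex (Fmap p).
Proof.
move=> hp; have hL := L_lt hp; have h1 := coord_le1 hp; have := N2 => hN.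
split.
  move=> i; rewrite Fmap_E divr_ge0 ?(ltW hL) // mulr_ge0 //; first exact: hp.1.
  by have := h1 i; lra.
under eq_bigr do rewrite Fmap_E.
by rewrite -mulr_suml sum_g // divff // gt_eqF.
Qed.

Lemma iter_simplex (p : 'rV[R]_n) t : simplex p -> simplex (iter t (@Fmap R n) p).
Proof. by move=> hp; elim: t => //= t ih; apply: F_simplex. Qed.

Lemma i0 : 'I_n.
Proof. by exists 0%N; apply: leq_trans hn. Qed.

Lemma step (p : 'rV[R]_n) a b c : simplex p -> 0 < c -> c <= a -> b <= 1 ->
  (forall i, a <= p ord0 i <= b) ->
  exists a' b', [/\ a <= a', b' <= 1, b' - a' <= (1 - c / N) * (b - a) &
    forall i, a' <= Fmap p ord0 i <= b'].
Proof.
move=> hp c0 ca b1 hab.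
have aL : a <= Lsq p by apply: Lsq_ge => // i; case/andP: (hab i).
have Lb : Lsq p <= b by apply: Lsq_le => // i; case/andP: (hab i).
have ab : a <= b by case/andP: (hab i0) => ? ?; apply: le_trans; eassumption.
exists (a * (N - a) / (N - Lsq p)), (b * (N - b) / (N - Lsq p)).
have a0 : 0 <= a by lra.
have [h1 _ _ h4] := step_real N2 aL Lb a0 b1 (lexx a) ab.
split => //; first exact: step_real5 N2 aL Lb c0 ca b1 ab.
move=> i; case/andP: (hab i) => hai hib.
have [_ h2 h3 _] := step_real N2 aL Lb a0 b1 hai hib.
by rewrite Fmap_E h2 h3.
Qed.

Lemma iter_bound (p0 : 'rV[R]_n) c : simplex p0 -> 0 < c ->
  (forall i, c <= p0 ord0 i) -> forall t, exists a b,
  [/\ c <= a, b <= 1, b - a <= (1 - c / N) ^+ t &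
    forall i, a <= iter t (@Fmap R n) p0 ord0 i <= b].
Proof.
move=> hp c0 hc; elim=> [|t [a [b [ca b1 hba hi]]]].
  exists c, 1; split => //=; first by rewrite expr0; lra.
  by move=> i; rewrite hc coord_le1.
have hr : 0 <= 1 - c / N.
  have := coord_le1 hp i0; have := hc i0; have := N2 => hN h1 h2.
  rewrite subr_ge0 ler_pdivrMr; last lra.
  nra.
have [a' [b' [aa' b'1 hb' hi']]] := step (iter_simplex t hp) c0 ca b1 hi.
exists a', b'; split => //; first exact: le_trans aa'.
apply: (le_trans hb'); rewrite exprS ler_wpM2l //.
Qed.

Lemma bary_close (p : 'rV[R]_n) a b : simplex p -> (forall i, a <= p ord0 i <= b) ->
  forall i, `|p ord0 i - N^-1| <= b - a.
Proof.
case=> hp hs hab i.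
have hN := N2.
have sa : N * a <= 1.
  rewrite -hs; apply: (@le_trans _ _ (\sum_(j < n) a)).
    by rewrite sumr_const card_ord mulr_natl.
  by apply: ler_sum => j _; case/andP: (hab j).
have sb : 1 <= N * b.
  rewrite -hs; apply: (@le_trans _ _ (\sum_(j < n) b)).
    by apply: ler_sum => j _; case/andP: (hab j).
  by rewrite sumr_const card_ord mulr_natl.
have ha : a <= N^-1 by rewrite -(mul1r N^-1) ler_pdivlMr; lra.
have hb : N^-1 <= b by rewrite -(mul1r N^-1) ler_pdivrMr; lra.
case/andP: (hab i) => h1 h2.
rewrite ler_norml; apply/andP; split; lra.
Qed.

Lemma part1 (p0 : 'rV[R]_n) : simplex p0 -> (forall i, 0 < p0 ord0 i) ->
     (fun t : nat => iter t (@Fmap R n) p0) @ \oo --> @barycenter R n.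
Proof.
move=> hp hpos.
have [j _ hj] := @arg_minP _ _ _ i0 predT (fun i => p0 ord0 i) isT.
set c := p0 ord0 _ in hj.
have c0 : 0 < c by apply: hpos.
have hc : forall i, c <= p0 ord0 i by move=> i; apply: hj.
have h1 : c <= 1 := coord_le1 hp j; have hN := N2.
have cN : 0 < c / N by rewrite divr_gt0 //; lra.
have cN1 : c / N <= 1 by rewrite ler_pdivrMr; lra.
have hr : `|1 - c / N| < 1 by rewrite ger0_norm; lra.
apply/cvgrPdist_le => e e0.
have := cvgr_dist_le _ _ (cvg_expr hr) e e0.
move=> h; near=> t.
have ht : `|0 - (1 - c / N) ^+ t| <= e by near: t; exact: h.
have [a [b [ca b1 hba hi]]] := iter_bound hp c0 hc t.
rewrite /Num.Def.normr/= mx_normrE (bigmax_le _ (ltW e0))//= => ij _.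
rewrite !mxE (ord1 ij.1) distrC.
apply: (le_trans (bary_close (iter_simplex t hp) hi ij.2)).
apply: (le_trans hba); move: ht; rewrite sub0r normrN ger0_norm //.
by apply: exprn_ge0; lra.
Unshelve. all: by end_near.
Qed.

Lemma part2 (p : 'rV[R]_n) : bdry_simplex p -> bdry_simplex (Fmap p).
Proof.
case=> hp [i hi]; split; first exact: F_simplex.
by exists i; rewrite Fmap_E hi !mul0r.
Qed.

Lemma part3 (q : 'rV[R]_n) : bdry_simplex q ->
  ~ lyapunov_stable_on (@simplex R n) (@Fmap R n) q.
Proof.
case=> hq [i hi] hst.
have hN := N2.
set v := barycenter R n - q.
have vi : v ord0 i = N^-1 by rewrite !mxE hi subr0.
have v0 : 0 < `|v|.
  rewrite normr_gt0; apply/eqP => hv; move: vi; rewrite hv mxE => /eqP.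
  by rewrite eq_sym invr_eq0 /N pnatr_eq0; case: n hn.
have [d d0 hd] := hst (`|v| / 2) ltac:(lra).
set s := Num.min 1 (d / (2 * `|v|)).
have s0 : 0 < s by rewrite lt_min ltr01 divr_gt0 //; lra.
have s1 : s <= 1 by rewrite ge_min lexx.
have s2 : s <= d / (2 * `|v|) by rewrite ge_min lexx orbT.
set p := q + s *: v.
have pE : forall k, p ord0 k = (1 - s) * q ord0 k + s * N^-1.
  by move=> k; rewrite !mxE; ring.
have hsum : \sum_(k < n) N^-1 = 1.
  by rewrite sumr_const card_ord -mulr_natl mulfV // gt_eqF //; lra.
have ppos : forall k, 0 < p ord0 k.
  move=> k; rewrite pE; have := hq.1 k => hk.
  have : 0 < s * N^-1 by rewrite mulr_gt0 // invr_gt0; lra.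
  nra.
have psimp : simplex p.
  split; first by move=> k; apply/ltW.
  under eq_bigr do rewrite pE.
  by rewrite big_split /= -!mulr_sumr hq.2 hsum; ring.
have pq : `|p - q| < d.
  rewrite /p [q + _]addrC addrK normrZ ger0_norm; last lra.
  have : s * `|v| <= d / 2.
    rewrite -(@ler_pM2r _ (`|v|)^-1) ?invr_gt0 // -mulrA mulfV ?gt_eqF // mulr1.
    by apply: (le_trans s2); rewrite invfM mulrA.
  lra.
have hcv := part1 psimp ppos.
have := cvgr_dist_lt _ _ hcv (`|v| / 2) ltac:(lra).
move=> /filter_ex [t ht].
have := hd p psimp pq t.
have := ler_distD (iter t (@Fmap R n) p) (barycenter R n) q.
rewrite -/v; lra.
Qed.

End S.
Unset Implicit Arguments.

Theorem corollary1 (R : realType) (n : nat) (hn : (2 <= n)%N) :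
  (forall p0 : 'rV[R]_n, simplex p0 -> (forall i, 0 < p0 ord0 i) ->
     (fun t : nat => iter t (@Fmap R n) p0) @ \oo --> @barycenter R n)
  /\ (forall p : 'rV[R]_n, bdry_simplex p -> bdry_simplex (Fmap p))
  /\ (forall q : 'rV[R]_n, bdry_simplex q -> Fmap q = q ->
        ~ lyapunov_stable_on (@simplex R n) (@Fmap R n) q).
Proof.
split; first exact: part1.
split; first exact: part2.
by move=> q hq _; exact: part3.
Qed.
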